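(* Let $\lambda>0$ and $f(z)=z+\sum_{k=2}^{\infty}a_kz^k$ analytic in $\mathbb{D}=\{z:|z|<1\}$. If $\sum_{k=2}^{\infty}(k-1)|a_k|<\lambda$, then $f\in\Omega_\lambda$. Moreover, for every $f(z)=z+\sum_{k=2}^\infty a_kz^k\in\Omega_\lambda$, $|a_k|\le\frac{\lambda}{k-1}$ for all $k\ge2$.
   Context: $\Omega_\lambda$ denotes the set of functions $f$ analytic in $\mathbb{D}$ with $f(0)=0$, $f'(0)=1$, such that $zf'(z)-f(z)=\lambda z^2\phi(z)$ for some analytic $\phi$ on $\mathbb{D}$ with $|\phi(z)|\le1$. *)

(* Defs.v *)
From Stdlib Require Import Reals.
From Coquelicot Require Import Coquelicot.

Definition inD (z : C) : Prop := Cmod z < 1.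

Definition analytic_on_D (f : C -> C) : Prop :=
  forall z, inD z -> ex_derive (K := C_AbsRing) (V := C_NormedModule) f z.

Definition has_expansion (f : C -> C) (a : nat -> C) : Prop :=
  forall z, inD z ->
    is_series (K := C_AbsRing) (V := C_NormedModule)
      (fun k => if (k <? 2)%nat then RtoC 0 else (a k * Cpow z k)%C) (f z - z)%C.

Definition Omega (lam : R) (f : C -> C) : Prop :=
  analytic_on_D f /\ f (RtoC 0) = RtoC 0 /\
  is_derive (K := C_AbsRing) (V := C_NormedModule) f (RtoC 0) (RtoC 1) /\
  exists phi : C -> C,
    analytic_on_D phi /\ (forall z, inD z -> Cmod (phi z) <= 1) /\
    forall z, inD z ->
      forall l : C, is_derive (K := C_AbsRing) (V := C_NormedModule) f z l ->
        (z * l - f z = RtoC lam * Cpow z 2 * phi z)%C.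

(* Main.v *)
Require Import Defs.
From Stdlib Require Import Reals Lra Lia Psatz ClassicalEpsilon.
From Coquelicot Require Import Coquelicot.
Open Scope R_scope.
Lemma plusC (x y : C) : plus x y = Cplus x y. Proof. reflexivity. Qed.
Ltac rring := match goal with |- ?x = ?y => change (@eq R x y) end; ring.
Ltac cring := match goal with |- ?x = ?y => change (@eq C x y) end; rewrite ?plusC; ring.

Definition PS (c : nat -> C) (z : C) : C :=
  epsilon (inhabits (RtoC 0))
    (fun l => is_series (K := C_AbsRing) (V := C_NormedModule) (fun n => (c n * Cpow z n)%C) l).

Lemma PS_spec c z l :
  is_series (K := C_AbsRing) (V := C_NormedModule) (fun n => (c n * Cpow z n)%C) l ->
  is_series (K := C_AbsRing) (V := C_NormedModule) (fun n => (c n * Cpow z n)%C) (PS c z).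
Proof. intro H. unfold PS. apply epsilon_spec. eauto. Qed.

Lemma Cseries_unique (a : nat -> C) l1 l2 :
  is_series (K := C_AbsRing) (V := C_NormedModule) a l1 ->
  is_series (K := C_AbsRing) (V := C_NormedModule) a l2 -> l1 = l2.
Proof.
  intros H1 H2.
  exact (filterlim_locally_unique (K:=C_AbsRing) (V:=C_NormedModule) (F:=eventually) (FF:=Proper_StrongProper _ eventually_filter) (sum_n a) l1 l2 H1 H2).
Qed.

Lemma PS_eq c z l :
  is_series (K := C_AbsRing) (V := C_NormedModule) (fun n => (c n * Cpow z n)%C) l -> PS c z = l.
Proof. intro H. exact (Cseries_unique _ _ _ (PS_spec _ _ _ H) H). Qed.

Lemma Cseries_zero : is_series (K := C_AbsRing) (V := C_NormedModule) (fun _ => RtoC 0) (RtoC 0).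
Proof.
  unfold is_series. eapply filterlim_ext; [| apply filterlim_const].
  intro n. simpl. induction n. rewrite sum_O. reflexivity.
  rewrite sum_Sn, <- IHn. change (RtoC 0 = Cplus 0 0). ring.
Qed.

Lemma Cseries_norm_le (a : nat -> C) (b : nat -> R) A B :
  is_series (K := C_AbsRing) (V := C_NormedModule) a A -> is_series b B ->
  (forall n, Cmod (a n) <= b n) -> Cmod A <= B.
Proof.
  intros HA HB Hab.
  assert (H1 : is_lim_seq (fun n => norm (sum_n a n)) (Cmod A)).
  { unfold is_lim_seq. eapply filterlim_comp. apply HA. apply (filterlim_norm (K:=C_AbsRing) (V:=C_NormedModule)). }
  assert (H2 : is_lim_seq (sum_n b) B) by exact HB.
  pose proof (is_lim_seq_le _ _ _ _ (fun n => Rle_trans _ _ _ (norm_sum_n_m (K:=C_AbsRing) (V:=C_NormedModule) a 0 n)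
     (sum_n_m_le _ _ 0 n (fun k => Hab k))) H1 H2) as H. simpl in H. exact H.
Qed.

Lemma Cseries_terms_bounded (a : nat -> C) l :
  is_series (K := C_AbsRing) (V := C_NormedModule) a l -> exists M, forall n, Cmod (a n) <= M.
Proof.
  intro H. destruct (filterlim_bounded (K:=C_AbsRing) (V:=C_NormedModule) (sum_n a)) as [M HM].
  { exists l. exact H. }
  exists (2 * M). intro n. destruct n.
  - specialize (HM 0%nat). rewrite sum_O in HM. change (Cmod (a 0%nat) <= M) in HM.
    assert (0 <= Cmod (a 0%nat)) by apply Cmod_ge_0. lra.
  - assert (E : a (S n) = Cminus (sum_n a (S n)) (sum_n a n)).
    { rewrite sum_Sn. change (a (S n) = Cminus (Cplus (sum_n a n) (a (S n))) (sum_n a n)). ring. }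
    rewrite E. unfold Cminus. eapply Rle_trans. apply Cmod_triangle.
    rewrite Cmod_opp. pose proof (HM (S n)). pose proof (HM n). change (norm (sum_n a (S n))) with (Cmod (sum_n a (S n))) in *.
    change (norm (sum_n a n)) with (Cmod (sum_n a n)) in *. lra.
Qed.

Lemma series_nonneg (t : nat -> R) (s : R) : (forall n, 0 <= t n) -> is_series t s -> 0 <= s.
Proof.
  intros Ht H. assert (H0 : is_lim_seq (fun _ => 0) 0) by apply is_lim_seq_const.
  pose proof (is_lim_seq_le (fun _ => 0) (sum_n t) 0 s) as L. simpl in L. apply L; auto.
  intro n. induction n. rewrite sum_O. auto. rewrite sum_Sn. change (0 <= sum_n t n + t (S n)). pose proof (Ht (S n)). lra.
Qed.

Lemma series_term_le (t : nat -> R) (s : R) : (forall n, 0 <= t n) -> is_series t s -> forall k, t k <= s.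
Proof.
  intros Ht H k.
  assert (H1 : is_series (fun m => t (S k + m)%nat) (s - sum_n t k)).
  { apply (is_series_incr_n t (S k)). lia. simpl. eapply is_series_ext; [intro; reflexivity|].
    assert (E : plus (s - sum_n t k) (sum_n t k) = s) by (change (s - sum_n t k + sum_n t k = s); ring).
    change (is_series t (s - sum_n t k + sum_n t k)). replace (s - sum_n t k + sum_n t k) with s by ring. exact H. }
  pose proof (series_nonneg _ _ (fun m => Ht _) H1).
  assert (t k <= sum_n t k).
  { destruct k. rewrite sum_O. lra. rewrite sum_Sn. change (t (S k) <= sum_n t k + t (S k)).
    assert (0 <= sum_n t k). { clear -Ht. induction k. rewrite sum_O; auto. rewrite sum_Sn. change (0 <= sum_n t k + t (S k)). pose proof (Ht (S k)); lra. }
    lra. }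
  lra.
Qed.

Lemma ex_series_n2 (q : R) : 0 < q < 1 -> ex_series (fun n => (INR n + 1)^2 * q^n).
Proof.
  intro Hq.
  assert (E : ex_series (fun n => Rabs ((INR n + 1)^2 * q^n))).
  { apply ex_series_DAlembert with q. lra.
    intro n. apply Rmult_integral_contrapositive. split. apply pow_nonzero. pose proof (pos_INR n). lra. apply pow_nonzero. lra.
    apply is_lim_seq_ext with (fun n => q * ((1 + / (INR n + 1)) * (1 + / (INR n + 1)))).
    { intro n. rewrite S_INR. rewrite Rabs_pos_eq.
      2:{ apply Rmult_le_pos. apply Rmult_le_pos. apply pow_le. pose proof (pos_INR n); lra. apply pow_le; lra.
          apply Rlt_le, Rinv_0_lt_compat. apply Rmult_lt_0_compat; [apply pow_lt; pose proof (pos_INR n); lra| apply pow_lt; lra]. }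
      simpl. pose proof (pos_INR n). assert (q ^ n <> 0) by (apply pow_nonzero; lra). field. repeat split; lra. }
    assert (L : is_lim_seq (fun n => 1 + / (INR n + 1)) (1 + 0)).
    { apply is_lim_seq_plus'. apply is_lim_seq_const.
      apply is_lim_seq_ext with (fun n => / INR (S n)). intro n. rewrite S_INR. reflexivity.
      apply (is_lim_seq_incr_1 (fun n => / INR n)). replace (Finite 0) with (Rbar_inv p_infty) by reflexivity. apply is_lim_seq_inv. apply is_lim_seq_INR. discriminate. }
    replace (Finite q) with (Finite (q * ((1 + 0) * (1 + 0)))) by (f_equal; ring).
    apply is_lim_seq_mult'. apply is_lim_seq_const. apply is_lim_seq_mult'; exact L. }
  eapply ex_series_ext. 2: exact E. intro n. apply Rabs_pos_eq. apply Rmult_le_pos. apply pow_le. pose proof (pos_INR n); lra. apply pow_le; lra.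
Qed.

Lemma derive_crit (f : C -> C) (z l : C) (d K : R) :
  0 < d -> 0 < K ->
  (forall w, Cmod (w - z) < d -> Cmod (f w - f z - (w - z) * l) <= K * Cmod (w - z) ^ 2) ->
  is_derive (K := C_AbsRing) (V := C_NormedModule) f z l.
Proof.
  intros Hd HK H. unfold is_derive, filterdiff. split.
  { apply (is_linear_scal_l (K:=C_AbsRing) (V:=C_NormedModule)). }
  intros x Hx. assert (Ezx : z = x) by (apply (is_filter_lim_locally_unique (K:=C_AbsRing) (V:=AbsRing_NormedModule C_AbsRing)); exact Hx). subst x.
  intro eps. apply (locally_le_locally_norm (K:=C_AbsRing) (V:=AbsRing_NormedModule C_AbsRing)).
  assert (Hm : 0 < Rmin d (eps / K)).
  { apply Rmin_glb_lt. lra. apply Rdiv_lt_0_compat. apply cond_pos. lra. }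
  exists (mkposreal _ Hm). intros w Hw. unfold ball_norm in Hw. simpl in Hw.
  change (norm (minus w z)) with (Cmod (w - z)) in Hw.
  change (Cmod (f w - f z - (w - z) * l) <= eps * Cmod (w - z)).
  pose proof (Rmin_l d (eps / K)). pose proof (Rmin_r d (eps / K)).
  eapply Rle_trans. apply H. lra.
  assert (0 <= Cmod (w - z)) by apply Cmod_ge_0.
  assert (K * Cmod (w - z) <= eps).
  { apply Rmult_le_reg_l with (/ K). apply Rinv_0_lt_compat; lra.
    rewrite <- Rmult_assoc, Rinv_l by lra. unfold Rdiv in *. lra. }
  simpl. nra.
Qed.

Lemma Ebound (w z : C) (rho : R) (n : nat) :
  0 < rho -> Cmod w <= rho -> Cmod z <= rho ->
  rho * Cmod (Cpow w (S n) - Cpow z (S n) - RtoC (INR (S n)) * (w - z) * Cpow z n)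
  <= (INR n + 1) ^ 2 * Cmod (w - z) ^ 2 * rho ^ n.
Proof.
  intros Hr Hw Hz. induction n.
  - simpl. replace (w * 1 - z * 1 - RtoC 1 * (w - z) * 1)%C with (RtoC 0) by (unfold RtoC; apply injective_projections; simpl; ring).
    rewrite Cmod_0. assert (0 <= Cmod (w - z)) by apply Cmod_ge_0. nra.
  - replace (Cpow w (S (S n)) - Cpow z (S (S n)) - RtoC (INR (S (S n))) * (w - z) * Cpow z (S n))%C
      with (w * (Cpow w (S n) - Cpow z (S n) - RtoC (INR (S n)) * (w - z) * Cpow z n)
            + RtoC (INR (S n)) * ((w - z) * (w - z)) * Cpow z n)%C.
    2:{ rewrite (S_INR (S n)). rewrite RtoC_plus. simpl Cpow. ring. }
    eapply Rle_trans. apply Rmult_le_compat_l. lra. apply Cmod_triangle.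
    rewrite !Cmod_mult, Cmod_pow, Cmod_R, Rabs_pos_eq by apply pos_INR.
    set (E := Cmod (Cpow w (S n) - Cpow z (S n) - RtoC (INR (S n)) * (w - z) * Cpow z n)) in *.
    set (D := Cmod (w - z)) in *.
    assert (0 <= E) by apply Cmod_ge_0. assert (0 <= D) by apply Cmod_ge_0.
    assert (0 <= Cmod w) by apply Cmod_ge_0. assert (0 <= Cmod z) by apply Cmod_ge_0.
    assert (Hzn : Cmod z ^ n <= rho ^ n) by (apply pow_incr; lra).
    assert (0 <= Cmod z ^ n) by (apply pow_le; lra).
    pose proof (pos_INR n). rewrite S_INR. simpl pow. simpl pow in IHn.
    assert (A1 : rho * (Cmod w * E) <= rho * (rho * E)) by (apply Rmult_le_compat_l; [lra| apply Rmult_le_compat_r; lra]).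
    assert (A2 : rho * (rho * E) <= rho * ((INR n + 1) * ((INR n + 1) * 1) * (D * (D * 1)) * rho ^ n)) by (apply Rmult_le_compat_l; lra).
    assert (A3 : (INR n + 1) * (D * D) * Cmod z ^ n <= (INR n + 1) * (D * D) * rho ^ n) by (apply Rmult_le_compat_l; [nra|lra]).
    assert (0 <= rho ^ n) by (apply pow_le; lra).
    assert (A4 : 0 <= (INR n + 1) * (D * D) * rho ^ n * rho) by (repeat apply Rmult_le_pos; nra).
    assert (A5 : rho * ((INR n + 1) * (D * D) * Cmod z ^ n) <= rho * ((INR n + 1) * (D * D) * rho ^ n)) by (apply Rmult_le_compat_l; lra).
    assert (X0 : 0 <= D * D * rho ^ n * rho) by (repeat apply Rmult_le_pos; lra).
    assert (A6 : ((INR n + 1) * (INR n + 1) + (INR n + 1)) * (D * D * rho ^ n * rho) <= (INR n + 1 + 1) * (INR n + 1 + 1) * (D * D * rho ^ n * rho)) by (apply Rmult_le_compat_r; nra).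
    assert (EQ1 : rho * (Cmod w * E + (INR n + 1) * (D * D) * Cmod z ^ n) = rho * (Cmod w * E) + rho * ((INR n + 1) * (D * D) * Cmod z ^ n)) by ring.
    rewrite EQ1.
    replace ((INR n + 1 + 1) * ((INR n + 1 + 1) * 1) * (D * (D * 1)) * (rho * rho ^ n)) with ((INR n + 1 + 1) * (INR n + 1 + 1) * (D * D * rho ^ n * rho)) by ring.
    replace (rho * ((INR n + 1) * ((INR n + 1) * 1) * (D * (D * 1)) * rho ^ n)) with ((INR n + 1) * (INR n + 1) * (D * D * rho ^ n * rho)) in A2 by ring.
    replace (rho * ((INR n + 1) * (D * D) * rho ^ n)) with ((INR n + 1) * (D * D * rho ^ n * rho)) in A5 by ring.
    lra.
Qed.

Lemma Cseries_val (a : nat -> C) (l l' : C) :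
  is_series (K := C_AbsRing) (V := C_NormedModule) a l -> l = l' ->
  is_series (K := C_AbsRing) (V := C_NormedModule) a l'.
Proof. intros H E. subst. exact H. Qed.

Lemma Rseries_shift (a : nat -> R) (L : R) :
  is_series a L -> is_series (fun n => a (S n)) (L - a 0%nat).
Proof.
  intro H. apply is_series_incr_1.
  assert (E : Rplus (L - a 0%nat) (a 0%nat) = L) by ring.
  change (is_series a (Rplus (L - a 0%nat) (a 0%nat))). rewrite E. exact H.
Qed.

Definition dc (c : nat -> C) (n : nat) : C := (RtoC (INR (S n)) * c (S n))%C.

Lemma Cseries_shift (a : nat -> C) L :
  is_series (K := C_AbsRing) (V := C_NormedModule) a L ->
  is_series (K := C_AbsRing) (V := C_NormedModule) (fun n => a (S n)) (L - a 0%nat)%C.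
Proof.
  intro H. apply is_series_incr_1.
  assert (E : Cplus (L - a 0%nat) (a 0%nat) = L) by ring.
  change (is_series (K := C_AbsRing) (V := C_NormedModule) a (Cplus (L - a 0%nat) (a 0%nat))). rewrite E. exact H.
Qed.

Lemma pow_bound_aux (x rho rho' B : R) (n : nat) :
  0 < rho -> rho < rho' -> 0 <= x -> x * rho' ^ (S n) <= B ->
  x * rho ^ n <= B / rho' * (rho / rho') ^ n.
Proof.
  intros H1 H2 H3 H4.
  assert (P1 : 0 < rho' ^ S n) by (apply pow_lt; lra).
  assert (E : B / rho' * (rho / rho') ^ n = B * rho ^ n / rho' ^ S n).
  { unfold Rdiv. rewrite Rpow_mult_distr, pow_inv. simpl. field. split. apply pow_nonzero; lra. lra. }
  rewrite E. assert (x <= B / rho' ^ S n).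
  { apply Rmult_le_reg_r with (rho' ^ S n). auto. unfold Rdiv. rewrite Rmult_assoc, Rinv_l by lra. lra. }
  assert (0 <= rho ^ n) by (apply pow_le; lra).
  unfold Rdiv in *. replace (B * rho ^ n * / rho' ^ S n) with (B * / rho' ^ S n * rho ^ n) by ring.
  apply Rmult_le_compat_r; auto.
Qed.

Lemma PS_abs_conv (c : nat -> C) (w : C) (rho' B : R) :
  0 < rho' -> Cmod w < rho' -> (forall n, Cmod (c n) * rho' ^ n <= B) ->
  is_series (K := C_AbsRing) (V := C_NormedModule) (fun n => (c n * Cpow w n)%C) (PS c w).
Proof.
  intros H1 H2 HB.
  assert (Hq : Rabs (Cmod w / rho') < 1).
  { rewrite Rabs_pos_eq. apply Rmult_lt_reg_r with rho'. auto. unfold Rdiv. rewrite Rmult_assoc, Rinv_l by lra. lra.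
    apply Rdiv_le_0_compat. apply Cmod_ge_0. auto. }
  destruct (ex_series_le (K:=C_AbsRing) (V:=C_CompleteNormedModule) (fun n => (c n * Cpow w n)%C) (fun n => B * (Cmod w / rho') ^ n)) as [l Hl].
  { intro n. change (Cmod (c n * Cpow w n) <= B * (Cmod w / rho') ^ n).
    rewrite Cmod_mult, Cmod_pow. unfold Rdiv. rewrite Rpow_mult_distr, pow_inv.
    assert (0 < rho' ^ n) by (apply pow_lt; lra).
    specialize (HB n). assert (0 <= Cmod (c n)) by apply Cmod_ge_0. assert (0 <= Cmod w ^ n) by (apply pow_le, Cmod_ge_0).
    replace (B * (Cmod w ^ n * / rho' ^ n)) with (B / rho' ^ n * Cmod w ^ n) by (unfold Rdiv; ring).
    apply Rmult_le_compat_r. auto. apply Rmult_le_reg_r with (rho' ^ n). auto. unfold Rdiv. rewrite Rmult_assoc, Rinv_l by lra. lra. }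
  { apply (@ex_series_scal_l R_AbsRing R_NormedModule B (fun n => (Cmod w / rho') ^ n)). apply ex_series_geom. auto. }
  apply PS_spec with l. exact Hl.
Qed.

Lemma PS_derive (c : nat -> C) (z : C) (rho rho' B : R) :
  Cmod z < rho -> rho < rho' -> (forall n, Cmod (c n) * rho' ^ n <= B) ->
  is_series (K := C_AbsRing) (V := C_NormedModule) (fun n => (dc c n * Cpow z n)%C) (PS (dc c) z) /\
  is_derive (K := C_AbsRing) (V := C_NormedModule) (PS c) z (PS (dc c) z).
Proof.
  intros Hz Hr HB.
  assert (Hrho : 0 < rho) by (pose proof (Cmod_ge_0 z); lra).
  assert (HB0 : 0 <= B) by (pose proof (HB 0%nat); pose proof (Cmod_ge_0 (c 0%nat)); simpl in *; lra).
  set (q := rho / rho').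
  assert (Hq : 0 < q < 1).
  { unfold q. split. apply Rdiv_lt_0_compat; lra. apply Rmult_lt_reg_r with rho'. lra. unfold Rdiv. rewrite Rmult_assoc, Rinv_l by lra. lra. }
  destruct (ex_series_n2 q Hq) as [S2 HS2].
  assert (HS2p : 0 <= S2).
  { apply (series_nonneg _ _ (fun n => Rmult_le_pos _ _ (pow_le _ 2 (Rplus_le_le_0_compat _ _ (pos_INR n) Rle_0_1)) (pow_le _ _ (Rlt_le _ _ (proj1 Hq))))) in HS2. exact HS2. }
  assert (Hcb : forall n t, 0 <= t <= rho -> Cmod (c (S n)) * t ^ n <= B / rho' * q ^ n).
  { intros n t Ht. eapply Rle_trans. apply Rmult_le_compat_l. apply Cmod_ge_0. apply pow_incr. exact Ht.
    apply pow_bound_aux; auto. apply Cmod_ge_0. }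
  assert (HD : is_series (K := C_AbsRing) (V := C_NormedModule) (fun n => (dc c n * Cpow z n)%C) (PS (dc c) z)).
  { destruct (ex_series_le (K:=C_AbsRing) (V:=C_CompleteNormedModule) (fun n => (dc c n * Cpow z n)%C) (fun n => B / rho' * ((INR n + 1)^2 * q ^ n))) as [l Hl].
    { intro n. change (Cmod (dc c n * Cpow z n) <= B / rho' * ((INR n + 1)^2 * q ^ n)).
      unfold dc. rewrite !Cmod_mult, Cmod_pow, Cmod_R, Rabs_pos_eq by (rewrite S_INR; pose proof (pos_INR n); lra).
      rewrite S_INR. pose proof (Hcb n (Cmod z) (conj (Cmod_ge_0 z) (Rlt_le _ _ Hz))).
      pose proof (pos_INR n). assert (0 <= q ^ n) by (apply pow_le; lra).
      assert (INR n + 1 <= (INR n + 1)^2) by nra.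
      assert (0 <= B / rho') by (apply Rdiv_le_0_compat; lra).
      assert (0 <= Cmod (c (S n)) * Cmod z ^ n) by (apply Rmult_le_pos; [apply Cmod_ge_0| apply pow_le, Cmod_ge_0]).
      replace (B / rho' * ((INR n + 1) ^ 2 * q ^ n)) with ((INR n + 1) ^ 2 * (B / rho' * q ^ n)) by ring.
      rewrite Rmult_assoc. apply Rmult_le_compat; nra. }
    { apply (@ex_series_scal_l R_AbsRing R_NormedModule (B / rho') (fun n => (INR n + 1) ^ 2 * q ^ n)). exists S2. exact HS2. }
    apply PS_spec with l. exact Hl. }
  split. exact HD.
  set (K0 := B / (rho * rho')).
  assert (HK0 : 0 <= K0) by (apply Rdiv_le_0_compat; nra).
  apply derive_crit with (d := rho - Cmod z) (K := K0 * S2 + 1). lra. nra.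
  intros w Hw.
  assert (Hwr : Cmod w < rho).
  { replace w with (z + (w - z))%C by ring. eapply Rle_lt_trans. apply Cmod_triangle. lra. }
  pose proof (PS_abs_conv c w rho' B ltac:(lra) ltac:(lra) HB) as Pw.
  pose proof (PS_abs_conv c z rho' B ltac:(lra) ltac:(lra) HB) as Pz.
  apply Cseries_shift in Pw. apply Cseries_shift in Pz.
  pose proof (is_series_minus _ _ _ _ Pw Pz) as P1.
  pose proof (is_series_scal_l (K:=C_AbsRing) (V:=C_NormedModule) (w - z)%C _ _ HD) as P2.
  pose proof (is_series_minus _ _ _ _ P1 P2) as P3.
  set (D := Cmod (w - z)).
  assert (P4 : is_series (fun n => K0 * D ^ 2 * ((INR n + 1)^2 * q ^ n)) (K0 * D ^ 2 * S2)).
  { apply (is_series_scal_l (K:=R_AbsRing) (V:=R_NormedModule) (K0 * D ^ 2)) in HS2. exact HS2. }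
  assert (Eq3 : plus (plus (PS c w - c 0%nat * Cpow w 0)%C (opp (PS c z - c 0%nat * Cpow z 0)%C)) (opp (scal (w - z)%C (PS (dc c) z)))
     = (PS c w - PS c z - (w - z) * PS (dc c) z)%C).
  { change (Cplus (Cplus (Cminus (PS c w) (c 0%nat * Cpow w 0)) (Copp (Cminus (PS c z) (c 0%nat * Cpow z 0)))) (Copp (Cmult (w - z) (PS (dc c) z))) = PS c w - PS c z - (w - z) * PS (dc c) z)%C. simpl. ring. }
  apply (fun H => Cseries_val _ _ _ H Eq3) in P3.
  eapply Rle_trans. eapply Cseries_norm_le. exact P3. exact P4.
  2:{ assert (0 <= D ^ 2) by (apply pow_le, Cmod_ge_0). replace (K0 * D ^ 2 * S2) with (K0 * S2 * D ^ 2) by ring.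
      apply Rmult_le_compat_r; lra. }
  intro n. change (Cmod (Cplus (Cplus (c (S n) * Cpow w (S n)) (Copp (c (S n) * Cpow z (S n)))) (Copp (Cmult (w - z) (dc c n * Cpow z n)))) <= K0 * D ^ 2 * ((INR n + 1) ^ 2 * q ^ n)).
  replace (Cplus (Cplus (c (S n) * Cpow w (S n)) (Copp (c (S n) * Cpow z (S n)))) (Copp (Cmult (w - z) (dc c n * Cpow z n))))
    with (c (S n) * (Cpow w (S n) - Cpow z (S n) - RtoC (INR (S n)) * (w - z) * Cpow z n))%C by (unfold dc; ring).
  rewrite Cmod_mult.
  pose proof (Ebound w z rho n Hrho (Rlt_le _ _ Hwr) (Rlt_le _ _ Hz)) as HE.
  set (E := Cmod (Cpow w (S n) - Cpow z (S n) - RtoC (INR (S n)) * (w - z) * Cpow z n)) in *.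
  pose proof (Hcb n rho (conj (Rlt_le _ _ Hrho) (Rle_refl _))) as Hc.
  assert (0 <= E) by apply Cmod_ge_0.
  assert (0 <= Cmod (c (S n))) by apply Cmod_ge_0.
  assert (Hr0 : 0 < rho ^ n) by (apply pow_lt; lra).
  assert (HE' : E <= (INR n + 1) ^ 2 * D ^ 2 * rho ^ n / rho).
  { apply Rmult_le_reg_l with rho. auto. unfold Rdiv. replace (rho * ((INR n + 1) ^ 2 * D ^ 2 * rho ^ n * / rho)) with ((INR n + 1) ^ 2 * D ^ 2 * rho ^ n) by (field; lra). exact HE. }
  eapply Rle_trans. apply Rmult_le_compat_l. auto. exact HE'.
  replace (Cmod (c (S n)) * ((INR n + 1) ^ 2 * D ^ 2 * rho ^ n / rho)) with ((Cmod (c (S n)) * rho ^ n) * ((INR n + 1) ^ 2 * D ^ 2 / rho)) by (field; lra).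
  replace (K0 * D ^ 2 * ((INR n + 1) ^ 2 * q ^ n)) with ((B / rho' * q ^ n) * ((INR n + 1) ^ 2 * D ^ 2 / rho)) by (unfold K0; field; lra).
  apply Rmult_le_compat_r. apply Rdiv_le_0_compat. apply Rmult_le_pos. apply pow_le. pose proof (pos_INR n); lra. apply pow_le, Cmod_ge_0. lra.
  exact Hc.
Qed.

Fixpoint csum (f : nat -> C) (n : nat) : C :=
  match n with O => RtoC 0 | S m => (csum f m + f m)%C end.

Lemma csum_ext f g n : (forall j, (j < n)%nat -> f j = g j) -> csum f n = csum g n.
Proof. induction n; intro H; simpl. auto. rewrite IHn, H; auto. Qed.

Lemma csum_scal x f n : csum (fun j => x * f j)%C n = (x * csum f n)%C.
Proof. induction n; simpl. ring. rewrite IHn. ring. Qed.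

Lemma csum_series (F : nat -> nat -> C) (L : nat -> C) N :
  (forall j, is_series (K := C_AbsRing) (V := C_NormedModule) (F j) (L j)) ->
  is_series (K := C_AbsRing) (V := C_NormedModule) (fun n => csum (fun j => F j n) N) (csum L N).
Proof.
  intro H. induction N; simpl.
  - apply Cseries_zero.
  - apply (is_series_plus _ _ _ _ IHN (H N)).
Qed.

Lemma csum_norm f n M : (forall j, Cmod (f j) <= M) -> Cmod (csum f n) <= INR n * M.
Proof.
  intro H. induction n; simpl csum. rewrite Cmod_0. simpl. lra.
  eapply Rle_trans. apply Cmod_triangle. rewrite S_INR. specialize (H n). lra.
Qed.

Lemma csum_geom x n : ((x - 1) * csum (fun j => Cpow x j) n = Cpow x n - 1)%C.
Proof. induction n; simpl. ring. rewrite Cmult_plus_distr_l, IHn. ring. Qed.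

Lemma csum_one n : csum (fun j => RtoC 1) n = RtoC (INR n).
Proof. induction n; simpl csum. reflexivity. rewrite IHn, S_INR, RtoC_plus. reflexivity. Qed.

Definition cis (x : R) : C := (cos x, sin x).

Lemma cis_pow x n : Cpow (cis x) n = cis (INR n * x).
Proof.
  induction n. simpl. unfold cis. rewrite Rmult_0_l, cos_0, sin_0. reflexivity.
  rewrite Cpow_S, IHn, S_INR. unfold cis, Cmult. simpl.
  replace ((INR n + 1) * x) with (x + INR n * x) by ring. rewrite cos_plus, sin_plus.
  f_equal; ring.
Qed.

Lemma Cmod_cis x : Cmod (cis x) = 1.
Proof. unfold Cmod, cis. cbn [fst snd]. replace (cos x ^ 2 + sin x ^ 2) with 1 by (rewrite <- (sin2_cos2 x); unfold Rsqr; ring). apply sqrt_1. Qed.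

Definition omg (N : nat) : C := cis (2 * PI / INR N).

Lemma omg_N N : (0 < N)%nat -> Cpow (omg N) N = RtoC 1.
Proof.
  intro H. unfold omg. rewrite cis_pow. replace (INR N * (2 * PI / INR N)) with (2 * PI).
  unfold cis. rewrite cos_2PI, sin_2PI. reflexivity.
  field. apply not_0_INR. lia.
Qed.

Lemma omg_ne1 N p : (0 < p < N)%nat -> Cpow (omg N) p <> RtoC 1.
Proof.
  intros Hp E. unfold omg in E. rewrite cis_pow in E. unfold cis in E.
  apply (f_equal fst) in E. simpl in E.
  set (y := INR p * PI / INR N).
  assert (HN : 0 < INR N) by (apply lt_0_INR; lia).
  assert (Hp0 : 0 < INR p) by (apply lt_0_INR; lia).
  assert (HpN : INR p < INR N) by (apply lt_INR; lia).
  replace (INR p * (2 * PI / INR N)) with (2 * y) in E by (unfold y; field; lra).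
  rewrite cos_2a_sin in E.
  assert (0 < sin y).
  { apply sin_gt_0. unfold y. apply Rdiv_lt_0_compat. pose proof PI_RGT_0. nra. auto.
    unfold y. apply Rmult_lt_reg_r with (INR N). auto. unfold Rdiv. rewrite Rmult_assoc, Rinv_l by lra. pose proof PI_RGT_0. nra. }
  nra.
Qed.

Lemma Cmod_omg_pow N p : Cmod (Cpow (omg N) p) = 1.
Proof. rewrite Cmod_pow. unfold omg. rewrite Cmod_cis. apply pow1. Qed.

Definition delta (N k n : nat) : C :=
  (RtoC (/ INR N) * csum (fun j => Cpow (Cpow (omg N) (n + N - k)) j) N)%C.

Lemma delta_norm N k n : (0 < N)%nat -> Cmod (delta N k n) <= 1.
Proof.
  intro HN. unfold delta. rewrite Cmod_mult, Cmod_R.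
  assert (0 < INR N) by (apply lt_0_INR; lia).
  rewrite Rabs_pos_eq by (apply Rlt_le, Rinv_0_lt_compat; lra).
  assert (Cmod (csum (fun j => Cpow (Cpow (omg N) (n + N - k)) j) N) <= INR N * 1).
  { apply csum_norm. intro j. rewrite <- Cpow_mult_r. rewrite Cmod_omg_pow. lra. }
  apply Rmult_le_reg_l with (INR N). auto. rewrite <- Rmult_assoc, Rinv_r by lra. lra.
Qed.

Lemma delta_k N k : (k < N)%nat -> delta N k k = RtoC 1.
Proof.
  intro H. unfold delta. replace (k + N - k)%nat with N by lia. rewrite omg_N by lia.
  rewrite (csum_ext _ (fun _ => RtoC 1)). rewrite csum_one.
  rewrite <- RtoC_mult. rewrite Rinv_l. reflexivity. apply not_0_INR. lia.
  intros j _. apply Cpow_1_l.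
Qed.

Lemma delta_other N k n : (k < N)%nat -> (n < N)%nat -> n <> k -> delta N k n = RtoC 0.
Proof.
  intros Hk Hn Hnk. unfold delta.
  set (x := Cpow (omg N) (n + N - k)).
  assert (Hx1 : x <> RtoC 1).
  { unfold x. destruct (Nat.lt_ge_cases n k).
    - apply omg_ne1. lia.
    - replace (n + N - k)%nat with (N + (n - k))%nat by lia. rewrite Cpow_add_r, omg_N by lia.
      rewrite Cmult_1_l. apply omg_ne1. lia. }
  assert (HxN : Cpow x N = RtoC 1).
  { unfold x. rewrite <- Cpow_mult_r, Nat.mul_comm, Cpow_mult_r, omg_N by lia. apply Cpow_1_l. }
  pose proof (csum_geom x N) as G. rewrite HxN in G.
  assert (G' : ((x - 1) * csum (fun j => Cpow x j) N = RtoC 0)%C) by (rewrite G; ring).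
  assert (Hx1' : (x - 1)%C <> RtoC 0).
  { intro E. apply Hx1. replace x with ((x - 1) + 1)%C by ring. rewrite E. ring. }
  destruct (Classical_Prop.classic (csum (fun j => Cpow x j) N = RtoC 0)) as [Z|Z].
  - rewrite Z. ring.
  - exfalso. exact (Cmult_neq_0 _ _ Hx1' Z G').
Qed.

Lemma coeff_bound (e : nat -> C) (r M : R) :
  0 < r ->
  (forall z, Cmod z = r ->
     is_series (K := C_AbsRing) (V := C_NormedModule) (fun n => (e n * Cpow z n)%C) (PS e z) /\ Cmod (PS e z) <= M) ->
  ex_series (fun n => Cmod (e n) * r ^ n) ->
  forall k, Cmod (e k) * r ^ k <= M.
Proof.
  intros Hr Hz [W HW] k. apply le_epsilon. intros eps Heps.
  set (w := fun n => Cmod (e n) * r ^ n) in *.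
  assert (HL : is_lim_seq (sum_n w) W) by exact HW.
  apply is_lim_seq_spec in HL. destruct (HL (mkposreal eps Heps)) as [N0 HN0]. simpl in HN0.
  set (N := S (Nat.max N0 k)).
  assert (HkN : (k < N)%nat) by lia. assert (HN : (0 < N)%nat) by lia.
  assert (HT : is_series (fun m => w (N + m)%nat) (W - sum_n w (pred N))).
  { apply is_series_incr_n. lia. change (is_series w (W - sum_n w (pred N) + sum_n w (pred N))).
    unfold Rminus. rewrite Rplus_assoc, Rplus_opp_l, Rplus_0_r. exact HW. }
  assert (HTe : W - sum_n w (pred N) <= eps).
  { specialize (HN0 (pred N) ltac:(lia)). apply Rabs_def2 in HN0. lra. }
  set (zj := fun j => (RtoC r * Cpow (omg N) j)%C).
  assert (Hzj : forall j, Cmod (zj j) = r).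
  { intro j. unfold zj. rewrite Cmod_mult, Cmod_R, Rabs_pos_eq, Cmod_omg_pow; lra. }
  set (a := fun n => (e n * RtoC (r ^ n) * delta N k n)%C).
  set (Sv := (RtoC (/ INR N) * csum (fun j => Cpow (omg N) (j * (N - k)) * PS e (zj j)) N)%C).
  assert (HS : is_series (K := C_AbsRing) (V := C_NormedModule) a Sv).
  { pose proof (csum_series (fun j n => Cpow (omg N) (j * (N - k)) * (e n * Cpow (zj j) n))%C
                 (fun j => Cpow (omg N) (j * (N - k)) * PS e (zj j))%C N) as H1.
    assert (H2 := H1 (fun j => is_series_scal_l (K:=C_AbsRing) (V:=C_NormedModule) (Cpow (omg N) (j * (N - k))) _ _ (proj1 (Hz _ (Hzj j))))).
    apply (is_series_scal_l (K:=C_AbsRing) (V:=C_NormedModule) (RtoC (/ INR N))) in H2.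
    eapply is_series_ext. 2: exact H2. intro n.
    change (RtoC (/ INR N) * csum (fun j => Cpow (omg N) (j * (N - k)) * (e n * Cpow (zj j) n)) N = a n)%C.
    rewrite (csum_ext _ (fun j => (e n * RtoC (r ^ n)) * Cpow (Cpow (omg N) (n + N - k)) j)%C).
    - rewrite csum_scal. unfold a, delta. change (csum (Cpow (Cpow (omg N) (n + N - k))) N) with (csum (fun j => Cpow (Cpow (omg N) (n + N - k)) j) N). ring.
    - intros j _. unfold zj. rewrite Cpow_mult_l, <- RtoC_pow, <- !Cpow_mult_r.
      replace ((n + N - k) * j)%nat with (j * (N - k) + j * n)%nat by nia.
      rewrite Cpow_add_r. ring. }
  assert (HSM : Cmod Sv <= M).
  { unfold Sv. rewrite Cmod_mult, Cmod_R.
    assert (0 < INR N) by (apply lt_0_INR; lia).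
    rewrite Rabs_pos_eq by (apply Rlt_le, Rinv_0_lt_compat; lra).
    assert (Cmod (csum (fun j => Cpow (omg N) (j * (N - k)) * PS e (zj j))%C N) <= INR N * M).
    { apply csum_norm. intro j. rewrite Cmod_mult, Cmod_omg_pow, Rmult_1_l. apply (Hz _ (Hzj j)). }
    apply Rmult_le_reg_l with (INR N). auto. rewrite <- Rmult_assoc, Rinv_r by lra. lra. }
  assert (Hpart : forall m, (m < N)%nat -> sum_n a m = if (k <=? m)%nat then (e k * RtoC (r ^ k))%C else RtoC 0).
  { induction m; intro Hm.
    - rewrite sum_O. destruct k.
      + unfold a. simpl. rewrite delta_k by lia. cring.
      + unfold a. simpl. rewrite delta_other by lia. cring.
    - rewrite sum_Sn, IHm by lia.
      destruct (Nat.eq_dec (S m) k) as [E|E].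
      + subst k. rewrite (proj2 (Nat.leb_gt (S m) m)) by lia. rewrite Nat.leb_refl.
        unfold a. rewrite delta_k by lia. cring.
      + replace (a (S m)) with (RtoC 0) by (unfold a; rewrite delta_other by lia; ring).
        destruct (Nat.leb_spec k m); destruct (Nat.leb_spec k (S m)); try lia; cring. }
  assert (HS2 : is_series (K := C_AbsRing) (V := C_NormedModule) (fun m => a (N + m)%nat) (Sv - e k * RtoC (r ^ k))%C).
  { apply is_series_incr_n. lia. rewrite Hpart by lia.
    rewrite (proj2 (Nat.leb_le k (pred N))) by lia.
    apply (Cseries_val _ Sv _ HS). cring. }
  assert (Hb : Cmod (Sv - e k * RtoC (r ^ k)) <= W - sum_n w (pred N)).
  { eapply Cseries_norm_le. exact HS2. exact HT. intro m. unfold a, w.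
    rewrite !Cmod_mult, Cmod_R, Rabs_pos_eq by (apply pow_le; lra).
    pose proof (delta_norm N k (N + m) HN).
    assert (0 <= Cmod (e (N + m)%nat) * r ^ (N + m)) by (apply Rmult_le_pos; [apply Cmod_ge_0 | apply pow_le; lra]).
    nra. }
  replace (Cmod (e k) * r ^ k) with (Cmod (e k * RtoC (r ^ k))).
  2:{ rewrite Cmod_mult, Cmod_R, Rabs_pos_eq. reflexivity. apply pow_le; lra. }
  replace (e k * RtoC (r ^ k))%C with (Sv + - (Sv - e k * RtoC (r ^ k)))%C by ring.
  eapply Rle_trans. apply Cmod_triangle. rewrite Cmod_opp. lra.
Qed.

Definition cf (a : nat -> C) (n : nat) : C := if (n <? 2)%nat then RtoC 0 else a n.
Definition ea (a : nat -> C) (n : nat) : C := (RtoC (INR (S n)) * a (S (S n)))%C.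

Lemma zD_minus_P (a : nat -> C) (z P D : C) :
  is_series (K := C_AbsRing) (V := C_NormedModule) (fun n => (cf a n * Cpow z n)%C) P ->
  is_series (K := C_AbsRing) (V := C_NormedModule) (fun n => (dc (cf a) n * Cpow z n)%C) D ->
  is_series (K := C_AbsRing) (V := C_NormedModule) (fun n => (Cpow z 2 * (ea a n * Cpow z n))%C) (z * D - P)%C.
Proof.
  intros HP HD. apply Cseries_shift in HP.
  apply (is_series_scal_l (K:=C_AbsRing) (V:=C_NormedModule) z) in HD.
  pose proof (is_series_minus _ _ _ _ HD HP) as H. apply Cseries_shift in H.
  eapply is_series_ext; [intro n | eapply Cseries_val; [exact H | ]].
  - change (Cplus (Cmult z (dc (cf a) (S n) * Cpow z (S n))) (Copp (cf a (S (S n)) * Cpow z (S (S n)))) = Cpow z 2 * (ea a n * Cpow z n))%C.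
    unfold dc, ea, cf. replace (S (S n) <? 2)%nat with false by reflexivity. rewrite (S_INR (S n)), RtoC_plus. simpl Cpow. ring.
  - change (Cminus (Cplus (Cmult z D) (Copp (P - cf a 0%nat * Cpow z 0))) (Cplus (Cmult z (dc (cf a) 0%nat * Cpow z 0)) (Copp (cf a 1%nat * Cpow z 1))) = z * D - P)%C.
    unfold dc, cf. simpl. ring.
Qed.

Lemma locally_D (z : C) : inD z ->
  locally (T := AbsRing_UniformSpace C_AbsRing) z (fun t => inD t).
Proof.
  intro Hz. apply (locally_le_locally_norm (K:=C_AbsRing) (V:=AbsRing_NormedModule C_AbsRing)).
  unfold inD in *. assert (H : 0 < 1 - Cmod z) by lra.
  exists (mkposreal _ H). intros t Ht. unfold ball_norm in Ht. simpl in Ht.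
  change (Cmod (t - z) < 1 - Cmod z) in Ht.
  replace t with (z + (t - z))%C by ring. eapply Rle_lt_trans. apply Cmod_triangle. lra.
Qed.

Lemma Cderive_id (z : C) : is_derive (K := C_AbsRing) (V := C_NormedModule) (fun t => t) z (RtoC 1).
Proof.
  apply derive_crit with 1 1. lra. lra. intros w _.
  replace (w - z - (w - z) * 1)%C with (RtoC 0) by ring. rewrite Cmod_0.
  pose proof (pow_le _ 2 (Cmod_ge_0 (w - z))). lra.
Qed.

Lemma Cderive_scal_r (g : C -> C) (z l c : C) :
  is_derive (K := C_AbsRing) (V := C_NormedModule) g z l ->
  is_derive (K := C_AbsRing) (V := C_NormedModule) (fun w => (g w * c)%C) z (l * c)%C.
Proof.
  intros [_ H]. split. apply (is_linear_scal_l (K:=C_AbsRing) (V:=C_NormedModule)).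
  intros x Hx. specialize (H x Hx). intro eps.
  assert (Hc : 0 < eps / (Cmod c + 1)) by (apply Rdiv_lt_0_compat; [apply cond_pos| pose proof (Cmod_ge_0 c); lra]).
  eapply filter_imp. 2: exact (H (mkposreal _ Hc)).
  intros y Hy. simpl in Hy.
  change (Cmod (g y - g x - (y - x) * l) <= eps / (Cmod c + 1) * Cmod (y - x)) in Hy.
  change (Cmod (g y * c - g x * c - (y - x) * (l * c)) <= eps * Cmod (y - x)).
  replace (g y * c - g x * c - (y - x) * (l * c))%C with ((g y - g x - (y - x) * l) * c)%C by ring.
  rewrite Cmod_mult. pose proof (Cmod_ge_0 c). pose proof (Cmod_ge_0 (y - x)). pose proof (Cmod_ge_0 (g y - g x - (y - x) * l)).
  pose proof (cond_pos eps).
  assert (E : eps / (Cmod c + 1) * (Cmod c + 1) = eps) by (field; lra).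
  assert (Cmod (g y - g x - (y - x) * l) * Cmod c <= Cmod (g y - g x - (y - x) * l) * (Cmod c + 1)) by nra.
  assert (Cmod (g y - g x - (y - x) * l) * (Cmod c + 1) <= eps / (Cmod c + 1) * Cmod (y - x) * (Cmod c + 1)) by (apply Rmult_le_compat_r; lra).
  replace (eps / (Cmod c + 1) * Cmod (y - x) * (Cmod c + 1)) with (eps * Cmod (y - x)) in H5 by (field; lra).
  lra.
Qed.

Lemma f_derive (f : C -> C) (a : nat -> C) (z : C) (rho rho' B : R) :
  (forall t, inD t -> f t = (t + PS (cf a) t)%C) -> inD z ->
  Cmod z < rho -> rho < rho' -> (forall n, Cmod (cf a n) * rho' ^ n <= B) ->
  is_derive (K := C_AbsRing) (V := C_NormedModule) f z (1 + PS (dc (cf a)) z)%C.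
Proof.
  intros Hf Hz H1 H2 HB.
  destruct (PS_derive (cf a) z rho rho' B H1 H2 HB) as [_ Hd].
  apply is_derive_ext_loc with (fun t => plus t (PS (cf a) t)).
  - eapply filter_imp. 2: apply locally_D, Hz. intros t Ht. rewrite Hf by exact Ht. reflexivity.
  - apply (is_derive_plus (K:=C_AbsRing) (V:=C_NormedModule)). apply Cderive_id. exact Hd.
Qed.

Lemma exp_series (f : C -> C) (a : nat -> C) z :
  has_expansion f a -> inD z ->
  is_series (K := C_AbsRing) (V := C_NormedModule) (fun n => (cf a n * Cpow z n)%C) (f z - z)%C.
Proof.
  intros H Hz. eapply is_series_ext. 2: exact (H z Hz). intro n. unfold cf.
  destruct (n <? 2)%nat; [cring | reflexivity].
Qed.

Lemma exp_PS (f : C -> C) (a : nat -> C) z :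
  has_expansion f a -> inD z -> f z = (z + PS (cf a) z)%C.
Proof.
  intros H Hz. rewrite (PS_eq _ _ _ (exp_series f a z H Hz)). ring.
Qed.

Lemma exp_bound (f : C -> C) (a : nat -> C) (rho' : R) :
  has_expansion f a -> 0 <= rho' < 1 -> exists B, forall n, Cmod (cf a n) * rho' ^ n <= B.
Proof.
  intros H Hr.
  assert (Hz : inD (RtoC rho')) by (unfold inD; rewrite Cmod_R, Rabs_pos_eq; lra).
  destruct (Cseries_terms_bounded _ _ (exp_series f a _ H Hz)) as [B HB].
  exists B. intro n. specialize (HB n). rewrite Cmod_mult, Cmod_pow, Cmod_R, Rabs_pos_eq in HB by lra. exact HB.
Qed.

Lemma Bernoulli_aux (r : R) (m : nat) : 0 <= r <= 1 -> 1 - INR m * (1 - r) <= r ^ m.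
Proof.
  intro Hr. induction m. simpl. lra.
  rewrite S_INR. simpl pow.
  assert (0 <= INR m) by apply pos_INR.
  assert (r * (1 - INR m * (1 - r)) <= r * r ^ m) by (apply Rmult_le_compat_l; lra).
  assert (E : r * (1 - INR m * (1 - r)) - (1 - (INR m + 1) * (1 - r)) = INR m * ((1 - r) * (1 - r))) by ring.
  assert (0 <= INR m * ((1 - r) * (1 - r))) by (apply Rmult_le_pos; nra).
  lra.
Qed.

Lemma limit_r1 (x L : R) (m : nat) : 0 <= x -> (forall r, 0 < r < 1 -> x * r ^ m <= L) -> x <= L.
Proof.
  intros Hx H. destruct (Rle_or_lt x L) as [|HxL]; auto. exfalso.
  assert (Hm := pos_INR m).
  set (d := Rmin (1/2) ((x - L) / (2 * (x * INR m + 1)))).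
  assert (Hd1 : d <= 1/2) by apply Rmin_l.
  assert (Hd2 : d <= (x - L) / (2 * (x * INR m + 1))) by apply Rmin_r.
  assert (Hd0 : 0 < d).
  { apply Rmin_glb_lt. lra. apply Rdiv_lt_0_compat. lra. nra. }
  specialize (H (1 - d) ltac:(lra)).
  pose proof (Bernoulli_aux (1 - d) m ltac:(lra)).
  assert (x * (1 - INR m * (1 - (1 - d))) <= x * (1 - d) ^ m) by (apply Rmult_le_compat_l; lra).
  assert (Hd3 : d * (2 * (x * INR m + 1)) <= x - L).
  { apply Rmult_le_reg_r with (/ (2 * (x * INR m + 1))). apply Rinv_0_lt_compat. nra.
    rewrite Rmult_assoc, Rinv_r by nra. unfold Rdiv in Hd2. lra. }
  nra.
Qed.

Lemma part1 (lam : R) (Hlam : 0 < lam) (f : C -> C) (a : nat -> C) :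
  analytic_on_D f -> has_expansion f a ->
  (exists s : R,
     is_series (fun k => if (k <? 2)%nat then 0 else (INR k - 1) * Cmod (a k)) s /\ s < lam) ->
  Omega lam f.
Proof.
  intros Hf Hexp [s [Hs Hsl]].
  set (t := fun k => if (k <? 2)%nat then 0 else (INR k - 1) * Cmod (a k)) in *.
  assert (Ht : forall k, 0 <= t k).
  { intro k. unfold t. destruct (k <? 2)%nat eqn:E. lra. apply Nat.ltb_ge in E.
    apply Rmult_le_pos. assert (2 <= INR k) by (replace 2 with (INR 2) by reflexivity; apply le_INR; lia). lra. apply Cmod_ge_0. }
  assert (Hs0 : 0 <= s) by exact (series_nonneg _ _ Ht Hs).
  assert (HB : forall n, Cmod (cf a n) * 1 ^ n <= s).
  { intro n. rewrite pow1, Rmult_1_r. unfold cf. destruct (n <? 2)%nat eqn:E. rewrite Cmod_0. lra.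
    pose proof (series_term_le _ _ Ht Hs n) as Hn. unfold t in Hn. rewrite E in Hn.
    apply Nat.ltb_ge in E. assert (2 <= INR n) by (replace 2 with (INR 2) by reflexivity; apply le_INR; lia).
    pose proof (Cmod_ge_0 (a n)). nra. }
  assert (HBe : forall n, Cmod (ea a n) * 1 ^ n <= s).
  { intro n. rewrite pow1, Rmult_1_r. pose proof (series_term_le _ _ Ht Hs (S (S n))) as Hn. unfold t in Hn. replace (S (S n) <? 2)%nat with false in Hn by reflexivity.
    unfold ea. rewrite Cmod_mult, Cmod_R, Rabs_pos_eq by apply pos_INR.
    replace (INR (S (S n)) - 1) with (INR (S n)) in Hn by (rewrite (S_INR (S n)); ring). exact Hn. }
  assert (Hfz : forall t, inD t -> f t = (t + PS (cf a) t)%C) by (intros; apply exp_PS; auto).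
  assert (Hder : forall z, inD z -> is_derive (K := C_AbsRing) (V := C_NormedModule) f z (1 + PS (dc (cf a)) z)%C).
  { intros z Hz. unfold inD in Hz. apply f_derive with ((Cmod z + 1) / 2) 1 s; auto; lra. }
  assert (H0 : inD (RtoC 0)) by (unfold inD; rewrite Cmod_0; lra).
  split; [exact Hf|]. split.
  { rewrite Hfz by exact H0. rewrite (PS_eq (cf a) (RtoC 0) (RtoC 0)). ring.
    eapply is_series_ext. 2: apply Cseries_zero. intro n. destruct n as [|[|n]]; unfold cf; simpl; ring. }
  split.
  { replace (RtoC 1) with (1 + PS (dc (cf a)) (RtoC 0))%C. apply Hder, H0.
    rewrite (PS_eq (dc (cf a)) (RtoC 0) (RtoC 0)). ring.
    eapply is_series_ext. 2: apply Cseries_zero. intro n. destruct n as [|n]; unfold dc, cf; simpl; ring. }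
  exists (fun w => (PS (ea a) w * RtoC (/ lam))%C).
  split.
  { intros z Hz. unfold inD in Hz. destruct (PS_derive (ea a) z ((Cmod z + 1) / 2) 1 s ltac:(lra) ltac:(lra) HBe) as [_ Hd].
    eexists. exact (Cderive_scal_r _ _ _ _ Hd). }
  split.
  { intros z Hz. unfold inD in Hz.
    assert (HS : is_series (fun n => Cmod (ea a n)) s).
    { assert (Hs2 : is_series (fun k => t (S (S k))) (s - t 0%nat - t 1%nat)).
      { apply (Rseries_shift (fun k => t (S k))). apply Rseries_shift. exact Hs. }
      replace (s - t 0%nat - t 1%nat) with s in Hs2 by (unfold t; simpl; ring).
      eapply is_series_ext. 2: exact Hs2. intro n. unfold t, ea. simpl plus. replace (S (S n) <? 2)%nat with false by reflexivity.
      rewrite Cmod_mult, Cmod_R, Rabs_pos_eq by apply pos_INR. rewrite (S_INR (S n)). rring. }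
    pose proof (PS_abs_conv (ea a) z 1 s ltac:(lra) Hz HBe) as Hz1.
    assert (Hle : Cmod (PS (ea a) z) <= s).
    { eapply Cseries_norm_le. exact Hz1. exact HS. intro n. cbv beta. rewrite Cmod_mult, Cmod_pow.
      assert (Cmod z ^ n <= 1) by (rewrite <- (pow1 n); apply pow_incr; split; [apply Cmod_ge_0| lra]).
      pose proof (Cmod_ge_0 (ea a n)). pose proof (pow_le (Cmod z) n (Cmod_ge_0 z)). nra. }
    rewrite Cmod_mult, Cmod_R, Rabs_pos_eq by (apply Rlt_le, Rinv_0_lt_compat; lra).
    apply Rmult_le_reg_r with lam. lra. rewrite Rmult_assoc, Rinv_l by lra. lra. }
  intros z Hz l Hl.
  assert (El : l = (1 + PS (dc (cf a)) z)%C).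
  { rewrite <- (is_C_derive_unique _ _ _ Hl). apply is_C_derive_unique. apply Hder, Hz. }
  unfold inD in Hz.
  destruct (PS_derive (cf a) z ((Cmod z + 1) / 2) 1 s ltac:(lra) ltac:(lra) HB) as [HD _].
  pose proof (PS_abs_conv (cf a) z 1 s ltac:(lra) Hz HB) as HP.
  pose proof (zD_minus_P a z _ _ HP HD) as H1.
  pose proof (PS_abs_conv (ea a) z 1 s ltac:(lra) Hz HBe) as H2.
  apply (is_series_scal_l (K:=C_AbsRing) (V:=C_NormedModule) (Cpow z 2)) in H2.
  pose proof (Cseries_unique _ _ _ H1 H2) as E. change (z * PS (dc (cf a)) z - PS (cf a) z = Cpow z 2 * PS (ea a) z)%C in E.
  rewrite El, Hfz by exact Hz.
  assert (Elam : (RtoC lam * RtoC (/ lam) = 1)%C) by (rewrite <- RtoC_mult, Rinv_r by lra; reflexivity).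
  transitivity (z * PS (dc (cf a)) z - PS (cf a) z)%C. ring.
  rewrite E. transitivity (Cpow z 2 * PS (ea a) z * (RtoC lam * RtoC (/ lam)))%C. rewrite Elam. ring. ring.
Qed.

Lemma part2 (lam : R) (Hlam : 0 < lam) (f : C -> C) (a : nat -> C) :
  has_expansion f a -> Omega lam f ->
  forall k : nat, (2 <= k)%nat -> Cmod (a k) <= lam / (INR k - 1).
Proof.
  intros Hexp [Hf [H0 [Hd1 [phi [Hphi [Hphib Hid]]]]]] k Hk.
  assert (Hfz : forall t, inD t -> f t = (t + PS (cf a) t)%C) by (intros; apply exp_PS; auto).
  assert (Key : forall z, inD z -> z <> RtoC 0 ->
     is_series (K := C_AbsRing) (V := C_NormedModule) (fun n => (ea a n * Cpow z n)%C) (PS (ea a) z)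
     /\ Cmod (PS (ea a) z) <= lam).
  { intros z Hz Hz0. pose proof Hz as Hz'. unfold inD in Hz'.
    set (rho' := (Cmod z + 1) / 2). set (rho := (Cmod z + rho') / 2).
    assert (0 <= Cmod z) by apply Cmod_ge_0.
    destruct (exp_bound f a rho' Hexp ltac:(unfold rho'; lra)) as [B HB].
    destruct (PS_derive (cf a) z rho rho' B ltac:(unfold rho, rho'; lra) ltac:(unfold rho, rho'; lra) HB) as [HD _].
    pose proof (f_derive f a z rho rho' B Hfz Hz ltac:(unfold rho, rho'; lra) ltac:(unfold rho, rho'; lra) HB) as Hder.
    pose proof (Hid z Hz _ Hder) as Eid.
    pose proof (exp_series f a z Hexp Hz) as HP.
    pose proof (zD_minus_P a z _ _ HP HD) as H1.
    apply (is_series_scal_l (K:=C_AbsRing) (V:=C_NormedModule) (/ Cpow z 2)%C) in H1.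
    assert (Hz2 : Cpow z 2 <> RtoC 0) by (apply Cpow_nz; exact Hz0).
    assert (H2 : is_series (K := C_AbsRing) (V := C_NormedModule) (fun n => (ea a n * Cpow z n)%C) (RtoC lam * phi z)%C).
    { eapply is_series_ext; [intro n | eapply Cseries_val; [exact H1|]].
      - change (/ Cpow z 2 * (Cpow z 2 * (ea a n * Cpow z n)) = ea a n * Cpow z n)%C. field; auto.
      - change (/ Cpow z 2 * (z * PS (dc (cf a)) z - (f z - z)) = RtoC lam * phi z)%C.
        replace (z * PS (dc (cf a)) z - (f z - z))%C with (z * (1 + PS (dc (cf a)) z) - f z)%C by ring.
        rewrite Eid. field; auto. }
    rewrite (PS_eq _ _ _ H2). split. exact H2.
    rewrite Cmod_mult, Cmod_R, Rabs_pos_eq by lra. pose proof (Hphib z Hz). nra. }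
  assert (Hr : forall r, 0 < r < 1 -> Cmod (ea a (k - 2)) * r ^ (k - 2) <= lam).
  { intros r Hr. apply coeff_bound.
    - lra.
    - intros z Hzr. apply Key. unfold inD. lra. intro E. rewrite E, Cmod_0 in Hzr. lra.
    - set (r' := (r + 1) / 2).
      destruct (Key (RtoC r')) as [Hs _].
      { unfold inD. rewrite Cmod_R, Rabs_pos_eq; unfold r'; lra. }
      { intro E. apply (f_equal fst) in E. simpl in E. unfold r' in E. lra. }
      destruct (Cseries_terms_bounded _ _ Hs) as [B HB].
      apply (ex_series_le (K:=R_AbsRing) (V:=R_CompleteNormedModule)) with (fun n => B * (r / r') ^ n).
      + intro n. change (Rabs (Cmod (ea a n) * r ^ n) <= B * (r / r') ^ n).
        specialize (HB n). rewrite Cmod_mult, Cmod_pow, Cmod_R, Rabs_pos_eq in HB by (unfold r'; lra).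
        assert (0 < r' ^ n) by (apply pow_lt; unfold r'; lra).
        assert (0 <= Cmod (ea a n)) by apply Cmod_ge_0.
        rewrite Rabs_pos_eq by (apply Rmult_le_pos; [lra| apply pow_le; lra]).
        unfold Rdiv. rewrite Rpow_mult_distr, pow_inv.
        assert (Cmod (ea a n) <= B / r' ^ n).
        { apply Rmult_le_reg_r with (r' ^ n). auto. unfold Rdiv. rewrite Rmult_assoc, Rinv_l by lra. lra. }
        assert (0 <= r ^ n) by (apply pow_le; lra).
        replace (B * (r ^ n * / r' ^ n)) with (B / r' ^ n * r ^ n) by (unfold Rdiv; ring).
        apply Rmult_le_compat_r; auto.
      + apply (@ex_series_scal_l R_AbsRing R_NormedModule B (fun n => (r / r') ^ n)). apply ex_series_geom. rewrite Rabs_pos_eq.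
        apply Rmult_lt_reg_r with r'. unfold r'; lra. unfold Rdiv. rewrite Rmult_assoc, Rinv_l by (unfold r'; lra). unfold r'; lra.
        apply Rdiv_le_0_compat; unfold r'; lra. }
  apply limit_r1 in Hr. 2: apply Cmod_ge_0.
  destruct k as [|[|k]]; try lia. replace (S (S k) - 2)%nat with k in Hr by lia.
  unfold ea in Hr. rewrite Cmod_mult, Cmod_R, Rabs_pos_eq in Hr by apply pos_INR.
  replace (INR (S (S k)) - 1) with (INR (S k)) by (rewrite (S_INR (S k)); ring).
  assert (0 < INR (S k)) by (apply lt_0_INR; lia).
  apply Rmult_le_reg_l with (INR (S k)). auto. unfold Rdiv. rewrite (Rmult_comm lam), <- Rmult_assoc, Rinv_r by lra. lra.
Qed.

Theorem theorem4p6 (lam : R) (Hlam : 0 < lam) :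
  (forall (f : C -> C) (a : nat -> C),
     analytic_on_D f -> has_expansion f a ->
     (exists s : R,
        is_series (fun k => if (k <? 2)%nat then 0 else (INR k - 1) * Cmod (a k)) s
        /\ s < lam) ->
     Omega lam f) /\
  (forall (f : C -> C) (a : nat -> C),
     has_expansion f a -> Omega lam f ->
     forall k : nat, (2 <= k)%nat -> Cmod (a k) <= lam / (INR k - 1)).
Proof.
  split.
  - intros f a Hf He Hs. exact (part1 lam Hlam f a Hf He Hs).
  - intros f a He Ho. exact (part2 lam Hlam f a He Ho).
Qed.
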